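(* Let $\mathcal M=(\{1,\dots,n\}\uplus\{\mathbf{good}\},\mathcal D,\mathbf Q)$ be a CTMDP with absorbing state $\mathbf{good}$, $B>0$, and let $\pi$ be a policy such that, writing $\mathbf d_t:=\pi_{B-t}$ and letting $W^\pi_t$ solve $\frac{d}{dt}W^\pi_t=\mathbf Q^{\mathbf d_t}W^\pi_t$ with $W^\pi_0=\mathbf u(\mathbf{good})$, the decision vector $\mathbf d_t$ maximizes $\mathbf Q^{\mathbf d}W^\pi_t$ (elementwise, over $\mathbf d\in\mathcal D$) for almost all $t\in[0,B]$. Take $t^*$ such that $\mathcal F_{n+2}(W^\pi_{t^*})$ differs from $\lim_{t\uparrow t^*}\mathcal F_{n+2}(W^\pi_t)$, and suppose $\mathcal F_{n+2}(W^\pi_{t^*})=\{\mathbf d^1,\dots,\mathbf d^p\}$ with $p>1$. For $i\in\{1,\dots,p\}$ let $$\Delta_i:=\sup\{\delta>0: \mathbf d^i\in\mathcal F_{n+2}(W^\pi_t)\text{ for all }t\in[t^*,t^*+\delta)\}.$$ Then $\Delta_1=\Delta_2=\dots=\Delta_p$. Moreover, suppose $t^*\le\delta_1<\delta_2<t^*+\Delta_1$ and $\pi_{B-t}=\mathbf d$ for all $t\in[\delta_1,\delta_2)$, for some $\mathbf d\in\mathcal F_{n+1}(W^\pi_{t^*})$. If $\pi'$ is a policy with $\pi'_{B-t}=\pi_{B-t}$ for $t\in[0,\delta_1)$ and $\pi'_{B-t}=\mathbf d'$ for all $t\in[\delta_1,\delta_2)$, for some $\mathbf d'\in\mathcal F_{n+1}(W^\pi_{t^*})\setminus\{\mathbf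 d\}$, then $\pi'$ also has the property that $\pi'_{B-t}$ maximizes $\mathbf Q^{\mathbf d}W^{\pi'}_t$ for almost all $t\in[0,\delta_2)$ (where $W^{\pi'}$ is defined from $\pi'$ in the same way as $W^\pi$ from $\pi$).
   Context: CTMDP: $\mathcal M=(S,\mathcal D,\mathbf Q)$ with finite state set $S$, decision vectors $\mathcal D=\prod_{s\in S}\mathcal D_s$ (finite action sets), and for each $\mathbf d\in\mathcal D$ a generator matrix $\mathbf Q^{\mathbf d}$ (off-diagonal entries $\mathbf Q^{\mathbf d}(s,s')\ge0$ depending only on $\mathbf d(s)$; diagonal entries make row sums zero). A state is absorbing if its row is zero for every $\mathbf d$. A policy is a measurable map $\pi:[0,B]\to\mathcal D$. $\mathbf u(s)$ is the vector with $1$ in coordinate $s$ and $0$ elsewhere. Vector comparisons and maximizations are elementwise. For a vector $W$ define recursively $\mathcal F_1(W)=\{\mathbf d\in\mathcal D:\mathbf d\text{ maximizes }\mathbf Q^{\mathbf d}W\}$ and, for $j\ge2$, $\mathcal F_j(W)=\{\mathbf d\in\mathcal F_{j-1}(W):\mathbf d\text{ maximizes }[\mathbf Q^{\mathbf d}]^jW\text{ over }\mathcal F_{j-1}(W)\}$. *)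

(* Defs.v *)
From HB Require Import structures.
From mathcomp Require Import all_boot all_order all_algebra.
From mathcomp Require Import all_classical all_reals all_analysis.
Set Implicit Arguments. Unset Strict Implicit. Unset Printing Implicit Defensive.
Import Order.TTheory GRing.Theory Num.Theory.
Local Open Scope ring_scope.
Local Open Scope classical_set_scope.

(* States {1,...,n} ⊎ {good}: good is None, state i is Some i. *)
Definition state (n : nat) : finType := option 'I_n.
Definition good (n : nat) : state n := None.

Section CTMDP.
Variables (R : realType) (n : nat).
Variable (Act : state n -> finType).
Definition decision := {dffun forall s : state n, Act s}.
(* rate s a s' = off-diagonal generator entry Q(s,s') when action a is chosen in s *)
Variable (rate : forall s : state n, Act s -> state n -> R).

(* the generator matrix Q^d: off-diagonal entries depend only on d(s),
   diagonal entries make the row sums zero *)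
Definition genQ (d : decision) (s s' : state n) : R :=
  if s' == s then - \sum_(s'' | s'' != s) rate (d s) s'' else rate (d s) s'.

Definition Qapp (d : decision) (W : state n -> R) : state n -> R :=
  fun s => \sum_s' genQ d s s' * W s'.

Definition Qpow (d : decision) (j : nat) (W : state n -> R) : state n -> R :=
  iter j (Qapp d) W.

Definition unitv (s0 : state n) : state n -> R := fun s => (s == s0)%:R.

Definition absorbing (s : state n) : Prop := forall d s', genQ d s s' = 0.

Fixpoint Fset (j : nat) (W : state n -> R) : set decision :=
  match j with
  | 0 => setT
  | j'.+1 => [set d | Fset j' W d /\
               forall d', Fset j' W d' -> forall s, Qpow d' j'.+1 W s <= Qpow d j'.+1 W s]
  end.

Definition is_policy (B : R) (pi : R -> decision) : Prop :=
  forall d, measurable [set t | 0 <= t <= B /\ pi t = d].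

(* W solves  d/dt W_t = Q^{pi_{B-t}} W_t, W_0 = u(good)  on [0,B]
   (Caratheodory sense: integral equation with integrable right-hand side) *)
Definition value_sol (B : R) (pi : R -> decision) (W : R -> state n -> R) : Prop :=
  forall s,
    lebesgue_measure.-integrable [set t | 0 <= t <= B]
      (fun t => (Qapp (pi (B - t)) (W t) s)%:E) /\
    forall t, 0 <= t <= B ->
      (W t s)%:E = adde (unitv (good n) s)%:E
        (\int[lebesgue_measure]_(x in [set x | 0 <= x <= t])
           (Qapp (pi (B - x)) (W x) s)%:E).

Definition Delta (B tstar : R) (W : R -> state n -> R) (j : nat) (d : decision) : \bar R :=
  ereal_sup [set delta%:E | delta in
    [set delta | 0 < delta /\
       forall t, tstar <= t < tstar + delta -> t <= B -> Fset j (W t) d]].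

End CTMDP.

(* Main.v *)
Require Import Defs.
From HB Require Import structures.
From mathcomp Require Import all_boot all_order all_algebra.
From mathcomp Require Import all_classical all_reals all_analysis.
From mathcomp Require Import lra ring.
Import Order.TTheory GRing.Theory Num.Theory.
Local Open Scope ring_scope.
Local Open Scope classical_set_scope.

Section Inc.
Context {R : realType}.
Local Notation mu := (@lebesgue_measure R).

Lemma setS_itv (u : R) : [set x : R | 0 <= x <= u] = `[0, u]%classic.
Proof. by apply/seteqP; split=> x /=; rewrite in_itv. Qed.

Lemma setO_itv (a u : R) : [set x : R | a < x <= u] = `]a, u]%classic.
Proof. by apply/seteqP; split=> x /=; rewrite in_itv. Qed.

Lemma mS (u : R) : measurable [set x : R | 0 <= x <= u].
Proof. by rewrite setS_itv. Qed.

Lemma mO (a u : R) : measurable [set x : R | a < x <= u].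
Proof. by rewrite setO_itv. Qed.

Lemma incr_bound (I : finType) (F : I -> R -> R) (f : I -> R -> R) (F0 : I -> R)
  (B : R) (c : I -> R) (a t K : R) :
 (forall i, mu.-integrable [set x | 0 <= x <= B] (fun x => (f i x)%:E)) ->
 (forall i t, 0 <= t <= B -> (F i t)%:E = adde (F0 i)%:E
     (\int[mu]_(x in [set x | 0 <= x <= t]) (f i x)%:E)) ->
 0 <= a -> a <= t -> t <= B -> 0 <= K ->
 {ae mu, forall x, a < x <= t -> `|\sum_i c i * f i x| <= K} ->
 `|\sum_i c i * (F i t - F i a)| <= K * (t - a).
Proof.
move=> fint Fe a0 aLt tB K0 hae.
have intO i : mu.-integrable [set x | a < x <= t] (fun x => (f i x)%:E).
  apply: integrableS (fint i) => //; [exact: mS|exact: mO|].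
  by move=> x /= /andP[/ltW ax xt]; rewrite (le_trans a0 ax) (le_trans xt tB).
have intS u i : u <= B -> mu.-integrable [set x | 0 <= x <= u] (fun x => (f i x)%:E).
  move=> uB; apply: integrableS (fint i) => //; [exact: mS|exact: mS|].
  by move=> x /= /andP[x0 xu]; rewrite x0 (le_trans xu uB).
have dif i : (F i t - F i a)%:E = (\int[mu]_(x in [set x : R | (a < x <= t)%R]) (f i x)%:E)%E.
  have hU : [set x : R | 0 <= x <= t] = [set x | 0 <= x <= a] `|` [set x | a < x <= t].
    apply/seteqP; split=> x /=.
      move=> /andP[x0 xt]; case: (leP x a) => xa; [left|right]; apply/andP; split=> //.
    case=> /andP[]; first by move=> -> xa; rewrite (le_trans xa aLt).
    by move=> ax ->; rewrite (le_trans a0 (ltW ax)).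
  have Ht := Fe i t; rewrite (le_trans a0 aLt) tB /= in Ht.
  have Ha := Fe i a; rewrite a0 (le_trans aLt tB) /= in Ha.
  have {}Ht := Ht isT; have {}Ha := Ha isT.
  rewrite hU integral_setU in Ht; last 4 first.
  - exact: mS.
  - exact: mO.
  - rewrite -hU; apply: measurable_int; exact: intS.
  - apply/disj_setPS => x [] /= /andP[_ xa] /andP[ax _]. by move: (lt_le_trans ax xa); rewrite ltxx.
  have fX : ((\int[mu]_(x in [set x : R | (0 <= x <= a)%R]) (f i x)%:E) \is a fin_num)%E.
    by apply: integrable_fin_num; [exact: mS|exact: intS (le_trans aLt tB)].
  have fY : ((\int[mu]_(x in [set x : R | (a < x <= t)%R]) (f i x)%:E) \is a fin_num)%E.
    by apply: integrable_fin_num; [exact: mO|exact: intO].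
  rewrite -(fineK fX) -(fineK fY) in Ht; rewrite -(fineK fX) in Ha; rewrite -(fineK fY).
  rewrite -!EFinD in Ht Ha; have := EFin_inj Ht; have := EFin_inj Ha.
  move=> h1 h2; congr (_%:E); lra.
have E : ((\sum_i c i * (F i t - F i a))%:E =
    \int[mu]_(x in [set x : R | (a < x <= t)%R]) (\sum_i c i * f i x)%:E)%E.
  rewrite -sumEFin (eq_bigr (fun i => \int[mu]_(x in [set x : R | (a < x <= t)%R]) ((c i)%:E * (f i x)%:E))%E); last first.
    move=> i _; rewrite EFinM dif -integralZl //. all: try exact: mO. all: try exact: intO.
  rewrite -integral_sum//. all: try exact: mO.
  - by apply: eq_integral => x _; rewrite -sumEFin.
  - move=> i; apply: integrableZl => //. all: try exact: mO. all: try exact: intO.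
have intSum : mu.-integrable [set x : R | (a < x <= t)%R] (fun x => (\sum_i c i * f i x)%:E).
  rewrite (_ : (fun x => _) = (fun x => \sum_i ((c i)%:E * (f i x)%:E))%E); last first.
    by apply/funext => x; rewrite sumEFin.
  apply: integrable_sum. all: try exact: mO.
  move=> i _; apply: integrableZl => //. all: try exact: mO. 
rewrite -lee_fin -abse_EFin E.
apply: le_trans (le_abse_integral _ _ _) _.
- exact: mO.
- exact: measurable_int intSum.
apply: le_trans (integral_le_bound K%:E _ _ _ _) _.
- exact: mO.
- exact: measurable_int intSum.
- by rewrite lee_fin.
- apply: (filterS _ hae); first exact: (ae_filter_ringOfSetsType mu).
  by move=> x h /h; rewrite abse_EFin lee_fin.
have hm : mu [set x : R | (a < x <= t)%R] = (t - a)%:E.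
  rewrite setO_itv lebesgue_measure_itv /= lte_fin.
  case: ltP => h; first by rewrite -EFinB.
  have -> : t = a by apply/le_anti; rewrite aLt h.
  by rewrite subrr.
by rewrite EFinM -hm; exact: le_refl.
Qed.

Lemma sol_bound (I : finType) (F f : I -> R -> R) (F0 : I -> R) (B : R) :
 (forall i, mu.-integrable [set x | 0 <= x <= B] (fun x => (f i x)%:E)) ->
 (forall i t, 0 <= t <= B -> (F i t)%:E = adde (F0 i)%:E
     (\int[mu]_(x in [set x | 0 <= x <= t]) (f i x)%:E)) ->
 exists M, 0 <= M /\ forall i t, 0 <= t <= B -> `|F i t| <= M.
Proof.
move=> fint Fe.
pose g i := fine (\int[mu]_(x in [set x : R | (0 <= x <= B)%R]) `|(f i x)%:E|)%E.
have g0 i : 0 <= g i.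
  by apply: fine_ge0; apply: integral_ge0 => x _; exact: abse_ge0.
exists (\sum_i (`|F0 i| + g i)); split.
  by apply: sumr_ge0 => i _; apply: addr_ge0.
move=> i t /andP[t0 tB].
have gfin : ((\int[mu]_(x in [set x : R | (0 <= x <= B)%R]) `|(f i x)%:E|) \is a fin_num)%E.
  rewrite ge0_fin_numE; last by apply: integral_ge0 => x _; exact: abse_ge0.
  by case/integrableP: (fint i).
apply: (@le_trans _ _ (`|F0 i| + g i)).
  rewrite -lee_fin -abse_EFin (Fe i t); last by rewrite t0 tB.
  apply: le_trans (lee_abs_add _ _) _.
  rewrite EFinD abse_EFin; apply: leeD2l.
  apply: le_trans (le_abse_integral _ _ _) _.
  - exact: mS.
  - apply: (measurable_int mu); apply: (integrableS _ _ _ (fint i)); [exact: mS|exact: mS|].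
    by move=> x /= /andP[x0 xt]; rewrite x0 (le_trans xt tB).
  rewrite /g fineK //; apply: ge0_subset_integral => //. all: try exact: mS.
  - first [exact: (measurable_int mu (integrable_abse (fint i))) | apply: (measurable_int mu); apply: integrable_abse; [exact: mS|exact: fint] | apply: (measurable_int mu); apply: integrable_abse; exact: fint].
  - by move=> x /= /andP[x0 xt]; rewrite x0 (le_trans xt tB).
rewrite (bigD1 i) //= lerDl; apply: sumr_ge0 => j _; exact: addr_ge0.
Qed.
End Inc.
Section Gron.
Context {R : realType}.

Lemma small0 (z M : R) : 0 <= M -> (forall m : nat, `|z| <= M / 2 ^+ m) -> z = 0.
Proof.
move=> M0 H; apply/normr0_eq0/eqP; rewrite eq_le normr_ge0 andbT.
rewrite leNgt; apply/negP => zp.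
have b0 : 0 <= M / `|z| by rewrite divr_ge0.
have := archi_boundP b0; set m := Num.bound _ => hm.
have h2 : (m%:R : R) < 2 ^+ m by rewrite -natrX ltr_nat ltn_expl.
have := H m; rewrite ler_pdivlMr ?exprn_gt0 // => h3.
have h4 : M < `|z| * m%:R by move: hm; first [rewrite ltr_pdivrMl //|rewrite ltr_pdivrMr // mulrC|rewrite ltr_pdivlMl //|rewrite ltr_pdivlMr // mulrC].
have h5 : `|z| * m%:R < `|z| * 2 ^+ m by rewrite ltr_pM2l.
have h6 := lt_trans h4 h5. lra.
Qed.

Lemma gronwall (I : finType) (y : I -> R -> R) (a M C : R) (P : R -> Prop) :
  (forall x t, a <= x -> x <= t -> P t -> P x) ->
  (forall i, y i a = 0) -> 0 <= M -> 0 <= C ->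
  (forall i t, a <= t -> P t -> `|y i t| <= M) ->
  (forall a' t K, a <= a' -> a' <= t -> P t -> 0 <= K ->
     (forall j x, a' <= x -> x <= t -> `|y j x| <= K) ->
     forall i, `|y i t - y i a'| <= C * K * (t - a')) ->
  forall i t, a <= t -> P t -> y i t = 0.
Proof.
move=> Pdown ya M0 C0 Mb Hinc.
set h := (2 * (C + 1))^-1.
have h0 : 0 < h by rewrite invr_gt0; lra.
have Ch : C * h <= 2^-1.
  rewrite /h ler_pdivrMr; last by lra.
  rewrite mulrA mulVf ?mul1r; lra.
have step : forall k : nat, forall i t, a <= t -> t <= a + k%:R * h -> P t -> y i t = 0.
  elim=> [|k IH] i t aLt th Pt.
    have -> : t = a by apply/le_anti/andP; split => //; move: th; rewrite (_ : (0%:R : R) = 0) // mul0r addr0.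
    exact: ya.
  case: (leP t (a + k%:R * h)) => tk; first exact: IH.
  set a' := a + k%:R * h in tk.
  have kh : 0 <= k%:R * h by rewrite mulr_ge0 // ltW.
  have a'a : a <= a' by rewrite /a' lerDl.
  have Pa' : P a' by apply: (Pdown a' t) => //; exact: ltW.
  have ya' j : y j a' = 0 by apply: (IH j a') => //.
  have ta' : t - a' <= h by move: th; rewrite /a' -nat1r mulrDl mul1r; lra.
  have bnd : forall m : nat, forall j x, a' <= x -> x <= t -> `|y j x| <= M / 2 ^+ m.
    elim=> [|m IHm] j x ax xt.
      by rewrite expr0 divr1; apply: Mb; [exact: le_trans ax|apply: (Pdown x t) => //; exact: le_trans ax].
    have Px : P x by apply: (Pdown x t) => //; exact: le_trans ax.
    have K0 : 0 <= M / 2 ^+ m by rewrite divr_ge0 // exprn_ge0.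
    have := Hinc a' x (M / 2 ^+ m) a'a ax Px K0
       (fun j' x' h1 h2 => IHm j' x' h1 (le_trans h2 xt)) j.
    rewrite ya' subr0 => H; apply: le_trans H _.
    have xa' : 0 <= x - a' by lra.
    have : C * (x - a') <= 2^-1.
      apply: le_trans Ch; apply: ler_wpM2l => //; lra.
    rewrite exprS invfM.
    set K := M / 2 ^+ m => hC.
    have -> : M * (2^-1 / 2 ^+ m) = 2^-1 * K by rewrite /K mulrCA.
    by rewrite mulrAC; apply: ler_wpM2r.
  apply: (@small0 _ M M0) => m; exact: bnd m i t (ltW tk) (lexx t).
move=> i t aLt Pt.
have q0 : 0 <= (t - a) / h by rewrite divr_ge0 ?subr_ge0 // ltW.
have := archi_boundP q0; set k := Num.bound _ => hk.
apply: (step k) => //.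
rewrite ltr_pdivrMr // in hk; lra.
Qed.
End Gron.
Section CH.
Context {R : realType} (T : finType) (A : T -> T -> R).
Definition opA (v : T -> R) : T -> R := fun s => \sum_s' A s s' * v s'.

Lemma op_CH N (hN : #|T| = N.+1) : exists c : nat -> R, forall v s,
  iter N.+1 opA v s = \sum_(k < N.+1) c k * iter k opA v s.
Proof.
pose ev := fun i : 'I_N.+1 => enum_val (cast_ord (esym hN) i).
pose er := fun s : T => cast_ord hN (enum_rank s).
have evK : cancel ev er by move=> i; rewrite /ev /er enum_valK cast_ordKV.
have erK : cancel er ev by move=> s; rewrite /ev /er cast_ordK enum_rankK.
have evbij : bijective ev by exists er.
pose M : 'M[R]_N.+1 := \matrix_(i, j) A (ev i) (ev j).
have key : forall k v i, (M ^+ k *m \col_j v (ev j)) i 0 = iter k opA v (ev i).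
  elim=> [|k IH] v i; first by rewrite expr0 mul1mx mxE.
  rewrite exprS -mulmxA mxE iterS /opA.
  rewrite (reindex ev) /=; last exact: onW_bij.
  by apply: eq_bigr => j _; rewrite mxE IH.
have CH := Cayley_Hamilton M.
set p := char_poly M in CH.
have hp : horner_mx M p = \sum_(i < N.+2) p`_i *: M ^+ i.
  rewrite -{1}[p]coefK poly_def size_char_poly rmorph_sum; apply: eq_bigr => i _.
  by rewrite -mul_polyC rmorphM /= horner_mx_C rmorphXn /= horner_mx_X [_ * _]mul_scalar_mx.
have lc : p`_N.+1 = 1.
  have := char_poly_monic M; move/monicP; rewrite lead_coefE size_char_poly.
  by [].
rewrite hp big_ord_recr /= lc scale1r in CH.
have hM : M ^+ N.+1 = - \sum_(i < N.+1) p`_i *: M ^+ i.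
  by apply/eqP; rewrite -addr_eq0 addrC CH.
exists (fun k => - p`_k) => v s.
rewrite -(erK s) -key hM mulNmx mulmx_suml mxE summxE -sumrN.
apply: eq_bigr => k _; rewrite -scalemxAl mxE key mulNr.
by [].
Qed.
End CH.
Section Alg.
Context {R : realType} {n : nat} {Act : state n -> finType}
  (rate : forall s : state n, Act s -> state n -> R).
Local Notation st := (state n).
Local Notation dec := (decision Act).

Definition ap (X : st -> st -> R) (v : st -> R) : st -> R :=
  fun s => \sum_s' X s s' * v s'.
Definition mmul (X Y : st -> st -> R) : st -> st -> R :=
  fun s s'' => \sum_s' X s s' * Y s' s''.

Lemma apM X Y v : ap (mmul X Y) v = ap X (ap Y v).
Proof.
apply/funext => s; rewrite /ap /mmul.
under eq_bigr do rewrite mulr_suml.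
rewrite exchange_big /=; apply: eq_bigr => s' _.
rewrite mulr_sumr; apply: eq_bigr => s'' _; by rewrite mulrA.
Qed.

Lemma ap_sum (X : st -> st -> R) (I : finType) (c : I -> R) (u : I -> st -> R) s :
  ap X (fun s' => \sum_i c i * u i s') s = \sum_i c i * ap X (u i) s.
Proof.
rewrite /ap; under eq_bigr do rewrite mulr_sumr.
rewrite exchange_big /=; apply: eq_bigr => i _.
rewrite mulr_sumr; apply: eq_bigr => s' _; by rewrite mulrCA.
Qed.

Lemma Qapp_ap d v : Qapp rate d v = ap (genQ rate d) v.
Proof. by []. Qed.

Lemma QpowS d k v : Qpow rate d k.+1 v = Qapp rate d (Qpow rate d k v).
Proof. by []. Qed.

Lemma QpowSr d k v : Qpow rate d k.+1 v = Qpow rate d k (Qapp rate d v).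
Proof. by rewrite /Qpow iterSr. Qed.

Lemma Qapp_sub d u v s : Qapp rate d u s - Qapp rate d v s = Qapp rate d (fun s' => u s' - v s') s.
Proof. by rewrite /Qapp -sumrB; apply: eq_bigr => s' _; rewrite mulrBr. Qed.

Lemma Fset_sub j W d : Fset rate j.+1 W d -> Fset rate j W d.
Proof. by case. Qed.

Lemma Fset_le j k W d : (k <= j)%N -> Fset rate j W d -> Fset rate k W d.
Proof.
elim: j => [|j IH] kj; first by rewrite leqn0 in kj; move/eqP: kj => ->.
rewrite leq_eqVlt in kj; case/orP: kj => [/eqP -> //|kj] /Fset_sub; exact: IH.
Qed.

Lemma Fset_eqQ j W d1 d2 : Fset rate j W d1 -> Fset rate j W d2 ->
  forall k, (k <= j)%N -> Qpow rate d1 k W = Qpow rate d2 k W.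
Proof.
elim: j => [|j IH] h1 h2 k kj.
  by rewrite leqn0 in kj; move/eqP: kj => ->.
rewrite leq_eqVlt in kj; case/orP: kj => [/eqP ->|kj]; last first.
  by apply: IH => //; [exact: Fset_sub h1|exact: Fset_sub h2].
case: h1 => f1 g1; case: h2 => f2 g2.
apply/funext => s; apply/le_anti; rewrite g1 // g2 //.
Qed.

Lemma Fset_transfer j W d1 d2 :
  (forall k, (k <= j)%N -> Qpow rate d1 k W = Qpow rate d2 k W) ->
  Fset rate j W d1 -> Fset rate j W d2.
Proof.
elim: j => [|j IH] hk // [f1 g1]; split.
  by apply: IH => // k kj; apply: hk; exact: ltnW.
by move=> d' fd' s; rewrite -(hk j.+1) //; exact: g1.
Qed.

Lemma Fset1_Qapp W d1 d2 : Fset rate 1 W d1 -> Fset rate 1 W d2 ->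
  Qapp rate d1 W = Qapp rate d2 W.
Proof. by move=> h1 h2; exact: (@Fset_eqQ 1 W d1 d2 h1 h2 1 (leqnn 1)). Qed.

End Alg.
Arguments Fset_eqQ {R n Act rate j W d1 d2}.
Arguments Fset_transfer {R n Act rate j W d1 d2}.
Arguments Fset1_Qapp {R n Act rate W d1 d2}.
Arguments Fset_le {R n Act rate j k W d}.
Arguments Fset_sub {R n Act rate j W d}.

Section Core.
Context {R : realType} {n : nat} {Act : state n -> finType}
  (rate : forall s : state n, Act s -> state n -> R).
Local Notation st := (state n).
Local Notation dec := (decision Act).
Local Notation mu := (@lebesgue_measure R).

Lemma card_st : #|{: st}| = n.+1.
Proof. by rewrite card_option card_ord. Qed.

Lemma core (B : R) (pi : R -> dec) (W : R -> st -> R)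
  (W_sol : value_sol rate B pi W)
  (pi_opt : {ae mu, forall t : R, 0 <= t <= B -> Fset rate 1 (W t) (pi (B - t))})
  (tstar T0 : R) (t0 : 0 <= tstar) (d1 d2 : dec) :
  Fset rate n.+1 (W tstar) d1 -> Fset rate n.+1 (W tstar) d2 ->
  (forall t, tstar <= t -> t < T0 -> t <= B -> Fset rate 1 (W t) d1) ->
  forall t, tstar <= t -> t < T0 -> t <= B ->
  forall k, (k <= n.+2)%N -> Qpow rate d2 k (W t) = Qpow rate d1 k (W t).
Proof.
move=> F1 F2 Hd1.
have eq0 := Fset_eqQ F1 F2.
pose A := genQ rate d1.
pose Dm := fun s s' => genQ rate d2 s s' - genQ rate d1 s s'.
pose mp := fun k => iter k (fun X => mmul X A) Dm.
have mpE : forall k v, ap (mp k) v = ap Dm (Qpow rate d1 k v).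
  elim=> [|k IH] v //.
  by rewrite /mp iterS -/(mp k) apM IH QpowSr.
have apDm : forall u s, ap Dm u s = Qapp rate d2 u s - Qapp rate d1 u s.
  by move=> u s; rewrite /ap /Qapp -sumrB; apply: eq_bigr => s' _; rewrite mulrBl.
have [c hc0] := @op_CH R _ A n card_st.
have hc : forall v s, Qpow rate d1 n.+1 v s = \sum_(k < n.+1) c k * Qpow rate d1 k v s.
  by move=> v s; exact: hc0.
have apDm_sum : forall (u : 'I_n.+1 -> st -> R) s,
    ap Dm (fun s' => \sum_(k < n.+1) c k * u k s') s = \sum_(k < n.+1) c k * ap Dm (u k) s.
  by move=> u s; exact: ap_sum.
have mpN : forall v s, ap (mp n.+1) v s = \sum_(k < n.+1) c k * ap (mp k) v s.
  move=> v s; rewrite mpE.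
  rewrite (_ : Qpow rate d1 n.+1 v = fun s' => \sum_(k < n.+1) c k * Qpow rate d1 k v s'); last first.
    by apply/funext => s'; exact: hc.
  by rewrite apDm_sum; apply: eq_bigr => k _; rewrite mpE.
have fint := fun s => (W_sol s).1.
have Fe := fun s => (W_sol s).2.
have [Mw [Mw0 HMw]] := @sol_bound R _ (fun s t => W t s) _ _ B fint Fe.
pose y := fun (i : 'I_n.+1 * st) t => ap (mp i.1) (W t) i.2.
pose C := 1 + \sum_(k < n.+1) `|c k|.
have C1 : 1 <= C by rewrite /C lerDl sumr_ge0.
have C0 : 0 <= C by apply: le_trans C1.
have Csum : \sum_(k < n.+1) `|c k| <= C by rewrite /C lerDr.
pose M := \sum_(i : 'I_n.+1 * st) \sum_s' `|mp i.1 i.2 s'| * Mw.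
have M0 : 0 <= M by apply: sumr_ge0 => i _; apply: sumr_ge0 => s' _; exact: mulr_ge0.
have Gr := @gronwall R _ y tstar M C (fun t => t < T0 /\ t <= B).
have yz : forall i t, tstar <= t -> t < T0 /\ t <= B -> y i t = 0.
  apply: Gr => //.
  - by move=> x t ax xt [tT tB]; split; [exact: le_lt_trans tT|exact: le_trans tB].
  - move=> [k s]; rewrite /y /= mpE apDm -QpowS.
    rewrite (eq0 k) ?(ltnW (ltn_ord k)) //.
    by rewrite -QpowS (eq0 k.+1) ?subrr // (ltn_ord k).
  - move=> [k s] t st [tT tB]; rewrite /y /ap /=.
    apply: le_trans (ler_norm_sum _ _ _) _.
    apply: (@le_trans _ _ (\sum_s' `|mp k s s'| * Mw)).
      apply: ler_sum => s' _; rewrite normrM; apply: ler_wpM2l => //.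
      by apply: HMw; rewrite (le_trans t0 st) tB.
    rewrite /M (bigD1 (k, s)) //= lerDl; apply: sumr_ge0 => i _.
    by apply: sumr_ge0 => s' _; exact: mulr_ge0.
  - move=> a' t K ta' a't [tT tB] K0 Hb [k s].
    have -> : y (k, s) t - y (k, s) a' = \sum_s' mp k s s' * (W t s' - W a' s').
      by rewrite /y /ap /= -sumrB; apply: eq_bigr => s' _; rewrite mulrBr.
    apply: (@incr_bound R _ (fun s t => W t s)
      (fun s x => Qapp rate (pi (B - x)) (W x) s) _ B (mp k s) a' t (C * K) fint Fe) => //.
    + exact: le_trans t0 ta'.
    + exact: mulr_ge0.
    + apply: (filterS _ pi_opt); first exact: (ae_filter_ringOfSetsType mu).
      move=> x Hx /andP[ax xt].
      have x0 : 0 <= x by apply: le_trans t0 (le_trans ta' (ltW ax)).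
      have xB : x <= B := le_trans xt tB.
      have hp : Fset rate 1 (W x) (pi (B - x)) by apply: Hx; rewrite x0 xB.
      have hd := Hd1 x (le_trans ta' (ltW ax)) (le_lt_trans xt tT) xB.
      rewrite (Fset1_Qapp hp hd).
      change (`|ap (mp k) (ap A (W x)) s| <= C * K).
      rewrite -apM.
      change (`|ap (mp k.+1) (W x) s| <= C * K).
      have Hb' := fun j => Hb j x (ltW ax) xt.
      case: (ltnP k n) => kn.
      * have := Hb' (Ordinal (kn : (k.+1 < n.+1)%N), s); rewrite /y /= => h.
        by apply: le_trans h _; rewrite -{1}[K]mul1r; apply: ler_wpM2r.
      * have kN : k = n :> nat by apply/eqP; rewrite eqn_leq kn -ltnS ltn_ord.
        rewrite kN mpN.
        apply: le_trans (ler_norm_sum _ _ _) _.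
        apply: (@le_trans _ _ (\sum_(j < n.+1) `|c j| * K)).
          apply: ler_sum => j _; rewrite normrM; apply: ler_wpM2l => //.
          exact: (Hb' (j, s)).
        rewrite -mulr_suml; apply: ler_wpM2r => //; exact: Csum.
move=> t tt tT tB.
have Dz : forall k, (k <= n.+1)%N -> forall s, ap Dm (Qpow rate d1 k (W t)) s = 0.
  move=> k; rewrite leq_eqVlt => /orP[/eqP ->|kn] s.
  - rewrite -mpE mpN big1 // => j _.
    by rewrite (_ : ap (mp j) (W t) s = y (j, s) t) // yz ?mulr0.
  - by rewrite -mpE; exact: (yz (Ordinal kn, s) t tt (conj tT tB)).
elim=> [|k IH] kn //.
rewrite QpowS IH ?(ltnW kn) //.
apply/funext => s; have := Dz k kn s; rewrite apDm.
by move/eqP; rewrite subr_eq0 => /eqP ->.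
Qed.

Lemma sum_delta (s : st) (X : st -> R) : \sum_s' (s' == s)%:R * X s' = X s.
Proof.
rewrite (bigD1 s) //= eqxx mul1r big1 ?addr0 // => s' /negbTE ->.
by rewrite mul0r.
Qed.

Lemma sol0 (B : R) (pi : R -> dec) (W : R -> st -> R) :
  0 <= B -> value_sol rate B pi W -> forall s, W 0 s = unitv R (good n) s.
Proof.
move=> B0 sol s; have := (sol s).2 0; rewrite lexx B0 => /(_ isT).
rewrite (@integral_Sset1 _ _ _ 0); last by move=> x /= /andP[x0 x0']; apply/le_anti; rewrite x0 x0'.
by move=> h; apply: EFin_inj; rewrite h /adde /= ?addr0.
Qed.

Lemma sol_uniq (B : R) (pi pi' : R -> dec) (W W' : R -> st -> R) (T1 : R) :
  value_sol rate B pi W -> value_sol rate B pi' W' -> T1 <= B -> 0 <= B ->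
  {ae mu, forall x, 0 < x < T1 -> exists e : dec, forall s,
     Qapp rate (pi' (B - x)) (W' x) s - Qapp rate (pi (B - x)) (W x) s =
     Qapp rate e (fun s' => W' x s' - W x s') s} ->
  forall s t, 0 <= t -> t < T1 -> W' t s = W t s.
Proof.
move=> sol sol' T1B B0 hae s t t0 tT.
have fint := fun s => (sol s).1.
have Fe := fun s => (sol s).2.
have fint' := fun s => (sol' s).1.
have Fe' := fun s => (sol' s).2.
have [Mw [Mw0 HMw]] := @sol_bound R _ (fun s t => W t s) _ _ B fint Fe.
have [Mw' [Mw0' HMw']] := @sol_bound R _ (fun s t => W' t s) _ _ B fint' Fe'.
pose y := fun s t => W' t s - W t s.
pose C := \sum_(e : dec) \sum_s \sum_s' `|genQ rate e s s'|.
have C0 : 0 <= C by do 3 (apply: sumr_ge0 => ? _).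
have Cb : forall (e : dec) s, \sum_s' `|genQ rate e s s'| <= C.
  move=> e s1; apply: (@le_trans _ _ (\sum_s \sum_s' `|genQ rate e s s'|)).
    rewrite [leRHS](bigD1 s1) //= lerDl; apply: sumr_ge0 => ? _; apply: sumr_ge0 => ? _ //.
  rewrite [leRHS](bigD1 e) //= lerDl; apply: sumr_ge0 => ? _; apply: sumr_ge0 => ? _.
  by apply: sumr_ge0 => ? _.
suff : y s t = 0 by move/eqP; rewrite subr_eq0 => /eqP.
apply: (@gronwall R _ y 0 (Mw' + Mw) C (fun t => t < T1)) => //.
- by move=> x t' _ xt; apply: le_lt_trans.
- by move=> s'; rewrite /y (sol0 _ _ _ B0 sol) (sol0 _ _ _ B0 sol') subrr.
- exact: addr_ge0.
- move=> s' t' t'0 t'T; rewrite /y; apply: le_trans (ler_normB _ _) _.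
  have t'B : 0 <= t' <= B by rewrite t'0 (le_trans (ltW t'T) T1B).
  by apply: lerD; [exact: HMw'|exact: HMw].
move=> a' t' K a'0 a't t'T K0 Hb s1.
pose F := fun (i : (st + st)%type) u => match i with inl s => W' u s | inr s => W u s end.
pose f := fun (i : (st + st)%type) x => match i with
  | inl s => Qapp rate (pi' (B - x)) (W' x) s | inr s => Qapp rate (pi (B - x)) (W x) s end.
pose cfs := fun (i : (st + st)%type) => match i with
  | inl s => (s == s1)%:R | inr s => - (s == s1)%:R end : R.
have fintS : forall i, mu.-integrable [set x | 0 <= x <= B] (fun x => (f i x)%:E).
  by case.
have FeS : forall i u, 0 <= u <= B -> (F i u)%:E = adde (unitv R (good n) (match i with inl s => s | inr s => s end))%:E
     (\int[mu]_(x in [set x | 0 <= x <= u]) (f i x)%:E).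
  by case=> s2 u hu /=; [exact: Fe'|exact: Fe].
have sumS : forall X : (st + st)%type -> R, \sum_(i : (st + st)%type) cfs i * X i = X (inl s1) - X (inr s1).
  move=> X; rewrite big_sumType /=.
  under [X in _ + X = _]eq_bigr do rewrite mulNr.
  by rewrite sumrN (sum_delta s1 (fun s => X (inl s))) (sum_delta s1 (fun s => X (inr s))).
have := @incr_bound R _ F f _ B cfs a' t' (C * K) fintS FeS a'0 a't (le_trans (ltW t'T) T1B) (mulr_ge0 C0 K0).
rewrite sumS /F /y => H.
have -> : W' t' s1 - W t' s1 - (W' a' s1 - W a' s1) = W' t' s1 - W' a' s1 - (W t' s1 - W a' s1) by ring.
apply: H.
apply: (filterS _ hae); first exact: (ae_filter_ringOfSetsType mu).
move=> x Hx /andP[ax xt].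
rewrite sumS /f.
have [e he] := Hx (ltac:(apply/andP; split; [exact: le_lt_trans a'0 ax|exact: le_lt_trans xt t'T])).
rewrite he /Qapp.
apply: le_trans (ler_norm_sum _ _ _) _.
apply: (@le_trans _ _ (\sum_s' `|genQ rate e s1 s'| * K)).
  apply: ler_sum => s' _; rewrite normrM; apply: ler_wpM2l => //.
  exact: (Hb s' x (ltW ax) xt).
by rewrite -mulr_suml; apply: ler_wpM2r => //; exact: Cb.
Qed.
End Core.

Theorem mainTheorem2 (R : realType) (n : nat) (Act : state n -> finType)
  (rate : forall s : state n, Act s -> state n -> R)
  (rate_ge0 : forall s a s', s' != s -> 0 <= rate s a s')
  (good_abs : absorbing rate (good n))
  (B : R) (B_gt0 : 0 < B)
  (pi : R -> decision Act) (pi_pol : is_policy B pi)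
  (W : R -> state n -> R) (W_sol : value_sol rate B pi W)
  (pi_opt : {ae lebesgue_measure, forall t : R,
              0 <= t <= B -> Fset rate 1 (W t) (pi (B - t))})
  (tstar : R) (htstar : 0 < tstar <= B)
  (hjump : exists L : set (decision Act), exists2 eps : R, 0 < eps &
      (forall t, 0 <= t -> tstar - eps < t < tstar -> Fset rate n.+2 (W t) = L) /\
      Fset rate n.+2 (W tstar) <> L)
  (hp : exists d1 d2 : decision Act, d1 <> d2 /\
      Fset rate n.+2 (W tstar) d1 /\ Fset rate n.+2 (W tstar) d2) :
  (forall d1 d2 : decision Act,
      Fset rate n.+2 (W tstar) d1 -> Fset rate n.+2 (W tstar) d2 ->
      Delta rate B tstar W n.+2 d1 = Delta rate B tstar W n.+2 d2) /\
  (forall d1 : decision Act, Fset rate n.+2 (W tstar) d1 ->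
   forall (delta1 delta2 : R) (d d' : decision Act)
          (pi' : R -> decision Act) (W' : R -> state n -> R),
     tstar <= delta1 -> delta1 < delta2 -> delta2 <= B ->
     (delta2%:E < tstar%:E + Delta rate B tstar W n.+2 d1)%E ->
     Fset rate n.+1 (W tstar) d ->
     (forall t, delta1 <= t < delta2 -> pi (B - t) = d) ->
     Fset rate n.+1 (W tstar) d' -> d' <> d ->
     is_policy B pi' ->
     (forall t, 0 <= t < delta1 -> pi' (B - t) = pi (B - t)) ->
     (forall t, delta1 <= t < delta2 -> pi' (B - t) = d') ->
     value_sol rate B pi' W' ->
     {ae lebesgue_measure, forall t : R,
        0 <= t < delta2 -> Fset rate 1 (W' t) (pi' (B - t))}).
Proof.
have t0 : 0 <= tstar by case/andP: htstar => /ltW.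
have B0 : 0 <= B := ltW B_gt0.
have transS : forall e1 e2, Fset rate n.+2 (W tstar) e1 -> Fset rate n.+2 (W tstar) e2 ->
    forall delta, (0 < delta /\ forall t, tstar <= t < tstar + delta -> t <= B -> Fset rate n.+2 (W t) e1) ->
    forall t, tstar <= t < tstar + delta -> t <= B -> Fset rate n.+2 (W t) e2.
  move=> e1 e2 h1 h2 delta [d0 H] t /andP[tt td] tB.
  have H1 : forall t, tstar <= t -> t < tstar + delta -> t <= B -> Fset rate 1 (W t) e1.
    move=> x xt xd xB; apply: (Fset_le (j := n.+2)) => //; apply: H => //; by rewrite xt xd.
  have hc := @core R n Act rate B pi W W_sol pi_opt tstar (tstar + delta) t0 e1 e2
    (Fset_sub h1) (Fset_sub h2) H1 t tt td tB.
  apply: (Fset_transfer (d1 := e1)); last by apply: H => //; rewrite tt td.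
  by move=> k kn; rewrite hc.
split.
  move=> d1 d2 h1 h2; rewrite /Delta; congr ereal_sup.
  apply/seteqP; split => _ [delta [d0 H] <-]; exists delta => //; split => //.
  - exact: (transS d1 d2 h1 h2 delta (conj d0 H)).
  - exact: (transS d2 d1 h2 h1 delta (conj d0 H)).
move=> d1 hd1 delta1 delta2 d d' pi' W' h1 h12 h2B hDelta hd hpid hd' hneq pol' hpi'1 hpi'2 sol'.
have [delta [d0 Hdel] hdel] : exists2 delta : R,
    (0 < delta /\ forall t, tstar <= t < tstar + delta -> t <= B -> Fset rate n.+2 (W t) d1)
    & delta2 - tstar < delta.
  move: hDelta; rewrite /Delta.
  set S := [set _%:E | _ in _].
  have key : forall x : R, (x%:E < ereal_sup S)%E -> exists2 delta : R,
      (0 < delta /\ forall t, tstar <= t < tstar + delta -> t <= B -> Fset rate n.+2 (W t) d1)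
      & x < delta.
    move=> x /ereal_sup_gt[_ [delta hdl <-]]; rewrite lte_fin => xd.
    by exists delta.
  case E : (ereal_sup S) => [r| |] h.
  - apply: key; rewrite E lte_fin; move: h; rewrite -EFinD lte_fin; lra.
  - by apply: key; rewrite E ltry.
  - by move: h; rewrite addeNy.
have Hwin1 : forall t, tstar <= t -> t < delta2 -> t <= B -> Fset rate 1 (W t) d1.
  move=> t tt td tB; apply: (Fset_le (j := n.+2)) => //; apply: Hdel => //.
  by rewrite tt /=; lra.
have hd'win : forall x, tstar <= x -> x < delta2 -> x <= B -> Fset rate 1 (W x) d'.
  move=> x xt xd xB.
  have hc := @core R n Act rate B pi W W_sol pi_opt tstar delta2 t0 d1 d'
    (Fset_sub hd1) hd' Hwin1 x xt xd xB.
  apply: (Fset_transfer (d1 := d1)); last exact: Hwin1.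
  by move=> k kn; rewrite hc // (leq_trans kn).
have uniq := @sol_uniq R n Act rate B pi pi' W W' delta2 W_sol sol' h2B B0.
have Weq : forall s t, 0 <= t -> t < delta2 -> W' t s = W t s.
  apply: uniq.
  apply: (filterS _ pi_opt); first exact: (ae_filter_ringOfSetsType lebesgue_measure).
  move=> x Hx /andP[x0 xd2].
  have xB : x <= B by apply: le_trans (ltW xd2) h2B.
  have hpx : Fset rate 1 (W x) (pi (B - x)) by apply: Hx; rewrite (ltW x0) xB.
  case: (ltP x delta1) => xd1.
  - exists (pi (B - x)) => s.
    rewrite (hpi'1 x); last by rewrite (ltW x0) xd1.
    exact: Qapp_sub.
  - exists d' => s.
    rewrite (hpi'2 x); last by rewrite xd1 xd2.
    rewrite (Fset1_Qapp hpx (hd'win x (le_trans h1 xd1) xd2 xB)).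
    exact: Qapp_sub.
apply: (filterS _ pi_opt); first exact: (ae_filter_ringOfSetsType lebesgue_measure).
move=> t Ht /andP[t0' td2].
have tB : t <= B by apply: le_trans (ltW td2) h2B.
have -> : W' t = W t by apply/funext => s; exact: Weq.
case: (ltP t delta1) => td1.
- rewrite (hpi'1 t); last by rewrite t0' td1.
  by apply: Ht; rewrite t0' tB.
- rewrite (hpi'2 t); last by rewrite td1 td2.
  exact: hd'win t (le_trans h1 td1) td2 tB.
Qed.
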